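(* Let $k\ge 2$, let $\boldsymbol\mu\in\mathbb{R}^k$ and let $\boldsymbol\Sigma$ be a symmetric positive definite $k\times k$ matrix. Let $n\ge2$, let $\alpha_1,\dots,\alpha_n>0$ be pairwise distinct, $\beta_1,\dots,\beta_n>0$ with $\sum_i\beta_i=1$, and $\phi_1,\dots,\phi_n>0$. Set $\boldsymbol\beta=(\beta_1,\dots,\beta_n)'$, $\mathbf{A}_0=\mathrm{diag}(\alpha_1,\dots,\alpha_n)$, $\boldsymbol\Phi=\mathrm{diag}(\phi_1,\dots,\phi_n)$, $\mathbf{B}=\mathrm{diag}(\beta_1,\dots,\beta_n)$, $\bar\phi=\sum_i\beta_i\phi_i$, $$\mathbf{A}=(\mathbf{A}_0+\boldsymbol\Phi)\mathbf{B}+(\bar\phi\mathbf{I}_n-2\boldsymbol\Phi)\boldsymbol\beta\boldsymbol\beta',\qquad \mathbf{A}_\phi=(\mathbf{A}+\mathbf{A}')/2,$$ and $\mathbf{Q}=\boldsymbol\Sigma^{-1}-\dfrac{\boldsymbol\Sigma^{-1}\mathbf{1}\mathbf{1}'\boldsymbol\Sigma^{-1}}{\mathbf{1}'\boldsymbol\Sigma^{-1}\mathbf{1}}$, where $\mathbf{1}\in\mathbb{R}^k$ and $\mathbf{1}_n\in\mathbb{R}^n$ are vectors of ones. Consider the problem of maximizing, over $k\times n$ real matrices $\mathbf{W}$, $$EU^*(\mathbf{W})=\boldsymbol\beta'\mathbf{W}'\boldsymbol\mu-\frac12\operatorname{tr}(\mathbf{A}\mathbf{W}'\boldsymbol\Sigma\mathbf{W})\quad\text{subject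 to}\quad \mathbf{W}'\mathbf{1}=\mathbf{1}_n.$$ Then $\mathbf{A}_\phi$ is symmetric and positive definite, and the optimal solution is $$\mathcal{W}^*=\frac{\boldsymbol\Sigma^{-1}\mathbf{1}}{\mathbf{1}'\boldsymbol\Sigma^{-1}\mathbf{1}}\mathbf{1}_n'+\mathbf{Q}\boldsymbol\mu\,(\boldsymbol\beta'\mathbf{A}_\phi^{-1}).$$
   Context: Here $\boldsymbol\mu$ and $\boldsymbol\Sigma$ are the mean vector and covariance matrix of the returns of $k$ risky assets; column $i$ of $\mathbf{W}$ is the portfolio weight vector of investor $i$ (risk aversion $\alpha_i$, wealth share $\beta_i$, mimicking coefficient $\phi_i$), and $EU^*$ is the aggregate (wealth-weighted) mean-variance objective of the investors, each penalizing the $\boldsymbol\Sigma$-weighted squared deviation of his portfolio from the aggregate portfolio $\mathbf{W}\boldsymbol\beta$. *)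

(* Defs.v *)
From HB Require Import structures.
From mathcomp Require Import all_boot all_order all_algebra.
Set Implicit Arguments. Unset Strict Implicit. Unset Printing Implicit Defensive.
Import Order.TTheory GRing.Theory Num.Theory.
Local Open Scope ring_scope.

Section Defs.
Variable R : realFieldType.

Definition sym_posdef (m : nat) (M : 'M[R]_m) : Prop :=
  M^T = M /\ forall x : 'cV[R]_m, x != 0 -> 0 < (x^T *m M *m x) ord0 ord0.

Definition ones (m : nat) : 'cV[R]_m := const_mx 1.

Variables (n : nat) (alpha beta phi : 'I_n -> R).

Definition betav : 'cV[R]_n := \col_i beta i.
Definition A0mx : 'M[R]_n := diag_mx (\row_i alpha i).
Definition Phimx : 'M[R]_n := diag_mx (\row_i phi i).
Definition Bmx : 'M[R]_n := diag_mx (\row_i beta i).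
Definition phibar : R := \sum_i beta i * phi i.

Definition Amx : 'M[R]_n :=
  (A0mx + Phimx) *m Bmx + (phibar%:M - 2%:R *: Phimx) *m (betav *m betav^T).

Definition Aphi : 'M[R]_n := 2%:R^-1 *: (Amx + Amx^T).

Variables (k : nat) (mu : 'cV[R]_k) (Sigma : 'M[R]_k).

Definition oSio : R := ((ones k)^T *m invmx Sigma *m ones k) ord0 ord0.

Definition Qmx : 'M[R]_k :=
  invmx Sigma - oSio^-1 *: (invmx Sigma *m ones k *m (ones k)^T *m invmx Sigma).

Definition EU (W : 'M[R]_(k, n)) : R :=
  (betav^T *m W^T *m mu) ord0 ord0 - 2%:R^-1 * \tr (Amx *m W^T *m Sigma *m W).

Definition feasible (W : 'M[R]_(k, n)) : Prop := W^T *m ones k = ones n.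

Definition Wstar : 'M[R]_(k, n) :=
  oSio^-1 *: (invmx Sigma *m ones k) *m (ones n)^T
  + Qmx *m mu *m (betav^T *m invmx Aphi).

End Defs.

(* Main.v *)
Require Import Defs.
From HB Require Import structures.
From mathcomp Require Import all_boot all_order all_algebra ring lra.
Set Implicit Arguments. Unset Strict Implicit. Unset Printing Implicit Defensive.
Import Order.TTheory GRing.Theory Num.Theory.
Local Open Scope ring_scope.

Section Gen.
Variable R : realFieldType.

Lemma qf_ge0 m (S : 'M[R]_m) (x : 'cV_m) : sym_posdef S -> 0 <= (x^T *m S *m x) 0 0.
Proof.
case=> _ H; have [->|nz] := eqVneq x 0; last exact: ltW (H _ nz).
by rewrite trmx0 !mul0mx mxE.
Qed.

Lemma posdef_unit m (S : 'M[R]_m) : sym_posdef S -> S \in unitmx.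
Proof.
move=> [St H]; rewrite -row_free_unit -kermx_eq0; apply/eqP/row_matrixP => i.
rewrite row0; set u := row i (kermx S).
have uS : u *m S = 0 by rewrite /u -row_mul mulmx_ker row0.
apply/eqP/negPn/negP => nz.
have nz' : u^T != 0 by apply: contra nz => /eqP h; rewrite -(trmxK u) h trmx0.
by move: (H _ nz'); rewrite trmxK uS mul0mx mxE ltxx.
Qed.

Lemma gram_diag m n (S : 'M[R]_m) (E : 'M[R]_(m, n)) i :
  (E^T *m S *m E) i i = ((col i E)^T *m S *m col i E) 0 0.
Proof.
rewrite !mxE; apply: eq_bigr => j _; rewrite !mxE; congr (_ * _).
by apply: eq_bigr => l _; rewrite !mxE.
Qed.

Lemma tr_diag_gram m n (S : 'M[R]_m) (E : 'M[R]_(m, n)) (w : 'I_n -> R) :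
  \tr (diag_mx (\row_i w i) *m (E^T *m S *m E)) =
  \sum_i w i * ((col i E)^T *m S *m col i E) 0 0.
Proof.
rewrite mul_diag_mx /mxtrace; apply: eq_bigr => i _; by rewrite mxE -gram_diag mxE.
Qed.

Lemma tr_diag_gram_ge0 m n (S : 'M[R]_m) (E : 'M[R]_(m, n)) (w : 'I_n -> R) :
  sym_posdef S -> (forall i, 0 <= w i) ->
  0 <= \tr (diag_mx (\row_i w i) *m (E^T *m S *m E)).
Proof.
move=> HS Hw; rewrite tr_diag_gram; apply: sumr_ge0 => i _.
by apply: mulr_ge0 => //; apply: qf_ge0.
Qed.

Lemma tr_diag_gram_gt0 m n (S : 'M[R]_m) (E : 'M[R]_(m, n)) (w : 'I_n -> R) :
  sym_posdef S -> (forall i, 0 < w i) -> E != 0 ->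
  0 < \tr (diag_mx (\row_i w i) *m (E^T *m S *m E)).
Proof.
move=> HS Hw nzE; rewrite tr_diag_gram.
case: (pickP (fun i => col i E != 0)) => [i /= ci|none]; last first.
  case/eqP: nzE; apply/matrixP => a b; move: (none b) => /= /negbFE/eqP/matrixP/(_ a 0).
  by rewrite !mxE.
rewrite (bigD1 i) //=.
have h1 : 0 < w i * ((col i E)^T *m S *m col i E) 0 0.
  by apply: mulr_gt0 => //; case: HS => _ H; apply: H.
apply: (lt_le_trans h1); rewrite lerDl.
apply: sumr_ge0 => j _; apply: mulr_ge0; first exact: ltW.
exact: qf_ge0.
Qed.

End Gen.

Section A.
Variable R : realFieldType.
Variables (n : nat) (alpha beta phi : 'I_n -> R).

Lemma outerE m p (u : 'cV[R]_m) (v : 'cV[R]_p) : u *m v^T = \matrix_(i, j) (u i 0 * v j 0).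
Proof. by apply/matrixP => i j; rewrite !mxE big_ord1 !mxE. Qed.

Let b := betav beta.
Let on := ones R n.
Let pbv : 'cV[R]_n := \col_i (phi i * beta i).
Let AB : 'M[R]_n := diag_mx (\row_i (alpha i * beta i)).
Let PB : 'M[R]_n := diag_mx (\row_i (phi i * beta i)).

Lemma Amx_E : Amx alpha beta phi = AB + PB + phibar beta phi *: (b *m b^T) - 2%:R *: (pbv *m b^T).
Proof.
rewrite /Amx mulmxA !mulmxBl mul_scalar_mx -!scalemxAl.
have -> : Phimx phi *m b = pbv by apply/matrixP=> i j; rewrite mul_diag_mx !mxE.
rewrite /A0mx /Phimx /Bmx mulmxDl !mulmx_diag.
rewrite !outerE; apply/matrixP => i j; rewrite !mxE.
case: eqP => _; rewrite ?mulr1n ?mulr0n; ring.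
Qed.

Lemma X_E : (1%:M - b *m on^T) *m PB *m (1%:M - on *m b^T) =
   PB - b *m pbv^T - pbv *m b^T + phibar beta phi *: (b *m b^T).
Proof.
have h1 : on^T *m PB = pbv^T by apply/matrixP=> i j; rewrite mul_mx_diag !mxE mul1r.
have h2 : PB *m on = pbv by apply/matrixP=> i j; rewrite mul_diag_mx !mxE mulr1.
have h3 : on^T *m pbv = (phibar beta phi)%:M.
  apply/matrixP=> i j; rewrite !ord1 !mxE /phibar /=; apply: eq_bigr => l _; rewrite !mxE; ring.
rewrite !mulmxBl !mulmxBr !mul1mx !mulmx1 (mulmxA PB) h2 -(mulmxA b) h1.
rewrite -(mulmxA b pbv^T) (mulmxA pbv^T).
have -> : pbv^T *m on = (phibar beta phi)%:M.
  apply/matrixP=> i j; rewrite !ord1 !mxE /phibar /=; apply: eq_bigr => l _; rewrite !mxE; ring.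
rewrite mul_scalar_mx -scalemxAr.
rewrite !outerE; apply/matrixP => i j; rewrite !mxE.
case: eqP => _; rewrite ?mulr1n ?mulr0n; ring.
Qed.

Lemma trA_G (G : 'M[R]_n) : G^T = G ->
  \tr (Amx alpha beta phi *m G) =
  \tr (AB *m G) + \tr (PB *m ((1%:M - on *m b^T) *m G *m (1%:M - b *m on^T))).
Proof.
move=> GT.
have EA : Amx alpha beta phi = AB + (1%:M - b *m on^T) *m PB *m (1%:M - on *m b^T)
             + (b *m pbv^T - pbv *m b^T).
  rewrite Amx_E X_E !outerE; apply/matrixP => i j; rewrite !mxE.
  case: eqP => _; rewrite ?mulr1n ?mulr0n; ring.
rewrite EA.
set X := (1%:M - b *m on^T) *m PB *m (1%:M - on *m b^T).
set Z := (b *m pbv^T - pbv *m b^T).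
set Y := (1%:M - on *m b^T) *m G *m (1%:M - b *m on^T).
rewrite !mulmxDl !mxtraceD -addrA; congr (_ + _).
rewrite -[RHS]addr0; congr (_ + _).
  by rewrite /X /Y !mulmxA [RHS]mxtrace_mulC !mulmxA.
rewrite ?mulNmx ?linearN /= -[X in X - _]mxtrace_tr !trmx_mul trmxK GT.
by rewrite mxtrace_mulC subrr.
Qed.

Lemma trA_pos m (S : 'M[R]_m) (D : 'M[R]_(m, n)) :
  sym_posdef S -> (forall i, 0 < alpha i) -> (forall i, 0 < beta i) ->
  (forall i, 0 < phi i) -> D != 0 ->
  0 < \tr (Amx alpha beta phi *m (D^T *m S *m D)).
Proof.
move=> HS ha hb hp nzD.
have GT : (D^T *m S *m D)^T = D^T *m S *m D.
  by rewrite !trmx_mul trmxK (proj1 HS) mulmxA.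
rewrite trA_G //.
have -> : (1%:M - on *m b^T) *m (D^T *m S *m D) *m (1%:M - b *m on^T)
   = (D *m (1%:M - b *m on^T))^T *m S *m (D *m (1%:M - b *m on^T)).
  rewrite [(D *m _)^T]trmx_mul [(1%:M - _)^T]linearB /= trmx1 trmx_mul trmxK !mulmxA. by [].
have h1 : 0 < \tr (AB *m (D^T *m S *m D)).
  by apply: tr_diag_gram_gt0 => // i; exact: mulr_gt0.
apply: (lt_le_trans h1).
rewrite lerDl; apply: tr_diag_gram_ge0 => // i; apply: ltW; exact: mulr_gt0.
Qed.

Lemma trAphi (G : 'M[R]_n) : G^T = G ->
  \tr (Aphi alpha beta phi *m G) = \tr (Amx alpha beta phi *m G).
Proof.
move=> GT; rewrite /Aphi -scalemxAl mxtraceZ mulmxDl mxtraceD.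
have -> : \tr ((Amx alpha beta phi)^T *m G) = \tr (Amx alpha beta phi *m G).
  by rewrite -mxtrace_tr trmx_mul trmxK GT mxtrace_mulC.
set t := \tr (Amx alpha beta phi *m G).
rewrite -mulr2n mulrC -[t *+ 2]mulr_natr mulrK // unitfE.
by rewrite pnatr_eq0.
Qed.

End A.

Lemma posdef1 (R : realFieldType) : sym_posdef (1%:M : 'M[R]_1).
Proof.
split; first exact: trmx1.
move=> y nz; rewrite mulmx1.
have y0 : y 0 0 != 0.
  apply: contra nz => /eqP h; apply/eqP/matrixP => i j; by rewrite !ord1 h mxE.
rewrite mxE big_ord1 mxE -expr2 exprn_even_gt0 //.
Qed.

Theorem theorem1 (R : realFieldType) (k n : nat) (mu : 'cV[R]_k) (Sigma : 'M[R]_k)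
  (alpha beta phi : 'I_n -> R) :
  (2 <= k)%N -> (2 <= n)%N ->
  sym_posdef Sigma ->
  (forall i, 0 < alpha i) -> injective alpha ->
  (forall i, 0 < beta i) -> \sum_i beta i = 1 ->
  (forall i, 0 < phi i) ->
  sym_posdef (Aphi alpha beta phi) /\
  feasible (Wstar alpha beta phi mu Sigma) /\
  (forall W : 'M[R]_(k, n), feasible W ->
     W <> Wstar alpha beta phi mu Sigma ->
     EU alpha beta phi mu Sigma W < EU alpha beta phi mu Sigma (Wstar alpha beta phi mu Sigma)).
Proof.
move=> hk hn HS ha ainj hb hsum hp.
have APD : sym_posdef (Aphi alpha beta phi).
  split.
    by rewrite /Aphi linearZ /= linearD /= trmxK addrC.
  move=> x nz.
  rewrite -trace_mx11 -mulmxA mxtrace_mulC -mulmxA trAphi; last by rewrite trmx_mul trmxK.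
  have -> : x *m x^T = (x^T)^T *m 1%:M *m x^T by rewrite trmxK mulmx1.
  apply: trA_pos => //; first exact: posdef1.
  by apply: contra nz => /eqP h; rewrite -(trmxK x) h trmx0.
split => //.
have Su := posdef_unit HS.
have Au := posdef_unit APD.
rewrite /feasible /EU /Wstar /Qmx /oSio.
set Si := invmx Sigma.
set o := ones R k. set on := ones R n. set b := betav beta.
set A := Amx alpha beta phi. set Ap := Aphi alpha beta phi.
have SiT : Si^T = Si by rewrite /Si trmx_inv (proj1 HS).
have SSi : Sigma *m Si = 1%:M by rewrite mulmxV.
have o_nz : o != 0.
  have k0 : (0 < k)%N by apply: leq_trans hk.
  apply/negP => /eqP/matrixP/(_ (Ordinal k0) 0); rewrite !mxE => /eqP; by rewrite oner_eq0.
set s := (o^T *m Si *m o) 0 0.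
have sM : o^T *m Si *m o = s%:M by rewrite {1}[o^T *m Si *m o]mx11_scalar.
have s_pos : 0 < s.
  have -> : s = ((Si *m o)^T *m Sigma *m (Si *m o)) 0 0.
    by rewrite trmx_mul SiT -!mulmxA (mulmxA Sigma) SSi mul1mx /s mulmxA.
  apply: (proj2 HS); apply: contra o_nz => /eqP h.
  by rewrite -(mul1mx o) -SSi -mulmxA h mulmx0.
have s0 : s != 0 by rewrite gt_eqF.
set Q := Si - s^-1 *: (Si *m o *m o^T *m Si).
have Qo : Q *m o = 0.
  rewrite /Q mulmxBl -scalemxAl -!mulmxA (mulmxA o^T) sM mul_mx_scalar -scalemxAr scalerA.
  by rewrite mulVf // scale1r subrr.
have QT : Q^T = Q.
  by rewrite /Q linearB linearZ /= !trmx_mul trmxK SiT !mulmxA.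
set Ws := s^-1 *: (Si *m o) *m on^T + Q *m mu *m (b^T *m invmx Ap).
have feasW : Ws^T *m o = on.
  rewrite /Ws linearD /= mulmxDl [(Q *m _ *m _)^T]trmx_mul [(Q *m mu)^T]trmx_mul.
  rewrite QT -!mulmxA Qo !mulmx0 addr0 trmx_mul trmxK linearZ /= trmx_mul SiT.
  by rewrite -mulmxA -scalemxAl sM scale_scalar_mx mulVf // mulmx1.
split => //.
set L := s^-1 *: (on^T *m Ap) - s^-1 *: (o^T *m Si *m mu *m b^T).
have SQ : Sigma *m Q = 1%:M - s^-1 *: (o *m o^T *m Si).
  by rewrite /Q mulmxBr -scalemxAr !mulmxA SSi mul1mx.
have St : Sigma *m Ws *m Ap = mu *m b^T + o *m L.
  rewrite /Ws mulmxDr mulmxDl.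
  have -> : Sigma *m (Q *m mu *m (b^T *m invmx Ap)) *m Ap
        = mu *m b^T - s^-1 *: (o *m (o^T *m Si *m mu *m b^T)).
    rewrite !mulmxA SQ -(mulmxA _ (invmx Ap)) mulVmx // mulmx1.
    by rewrite mulmxBl !mul1mx mulmxBl -!scalemxAl.
  have -> : Sigma *m (s^-1 *: (Si *m o) *m on^T) *m Ap = o *m (s^-1 *: (on^T *m Ap)).
    rewrite -[in LHS]scalemxAl -[Sigma *m _]scalemxAr -[in LHS]scalemxAl -[in RHS]scalemxAr.
    by rewrite !mulmxA SSi mul1mx.
  by rewrite /L mulmxBr -!scalemxAr addrCA addrA.
move=> W fW neq.
set D := W - Ws.
have DT : D^T *m o = 0 by rewrite /D linearB /= mulmxBl fW feasW subrr.
have nzD : D != 0.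
  by apply/eqP => h; apply: neq; apply/eqP; rewrite -subr_eq0; apply/eqP.
have WE : W = Ws + D by rewrite /D addrC subrK.
have AAT : A + A^T = 2%:R *: Ap.
  by rewrite /Ap /Aphi scalerA mulfV ?scale1r // pnatr_eq0.
have Cr : \tr (A *m D^T *m Sigma *m Ws) + \tr (A *m Ws^T *m Sigma *m D)
          = 2%:R * (b^T *m D^T *m mu) 0 0.
  have e1 : \tr (A *m D^T *m Sigma *m Ws) = \tr (D^T *m (Sigma *m Ws *m A)).
    by rewrite -!mulmxA mxtrace_mulC !mulmxA.
  have e2 : \tr (A *m Ws^T *m Sigma *m D) = \tr (D^T *m (Sigma *m Ws *m A^T)).
    by rewrite -mxtrace_tr !trmx_mul trmxK (proj1 HS) !mulmxA.
  rewrite e1 e2 -mxtraceD -mulmxDr -mulmxDr AAT -scalemxAr -scalemxAr mxtraceZ St.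
  rewrite mulmxDr (mulmxA D^T o) DT mul0mx addr0 mulmxA mxtrace_mulC mulmxA trace_mx11.
  by [].
have Pos := trA_pos HS ha hb hp nzD.
rewrite !mulmxA in Pos.
rewrite -/A in Pos.
rewrite WE; clearbody A D Ws.
have E1 : (b^T *m (Ws + D)^T *m mu) 0 0 = (b^T *m Ws^T *m mu) 0 0 + (b^T *m D^T *m mu) 0 0.
  by rewrite linearD /= mulmxDr mulmxDl mxE.
have E2 : \tr (A *m (Ws + D)^T *m Sigma *m (Ws + D)) = \tr (A *m Ws^T *m Sigma *m Ws)
   + (\tr (A *m D^T *m Sigma *m Ws) + \tr (A *m Ws^T *m Sigma *m D)) + \tr (A *m D^T *m Sigma *m D).
  rewrite [(Ws + D)^T]linearD /= !mulmxDr !mulmxDl !mxtraceD; ring.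
rewrite E1 E2 Cr.
lra.
Qed.
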